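(* The chaotic relaxation for the system $\mathbf{Lx}=\mathbf{b}$ defined by the splitting $\mathbf{D + \tilde{L}}$, with $\mathbf{D}$ nonsingular block diagonal and $\mathbf{\tilde{L}}$ strictly lower block triangular, converges.
   Context: Let $\mathbf{L}\in\mathbb{R}^{n\times n}$ be lower block triangular with square $b\times b$ blocks ($n$ divisible by $b$) and nonsingular diagonal blocks, split as $\mathbf{L}=\mathbf{D}+\tilde{\mathbf{L}}$ with $\mathbf{D}$ its block diagonal part and $\tilde{\mathbf{L}}$ its strictly lower block triangular part. For a splitting $\mathbf{L}=\mathbf{M}+\mathbf{N}$ (here $\mathbf{M}=\mathbf{D}$, $\mathbf{N}=\tilde{\mathbf{L}}$), set $\mathbf{B}:=-\mathbf{M}^{-1}\mathbf{N}$ and $\mathbf{C}:=\mathbf{M}^{-1}$ with rows $\mathbf{c}_i^T$. The chaotic relaxation (Chazan–Miranker) is the iteration $x_i^{j+1}=x_i^j$ if $i\neq u(j)$ and $x_i^{j+1}=\sum_{\alpha=1}^n B_{i\alpha}x_\alpha^{j-s_\alpha(j)}+\mathbf{c}_i^T\mathbf{b}$ if $i=u(j)$, where the shift functions $s_\alpha:\mathbb{N}\to\mathbb{N}$ satisfy $0\le s_\alpha(j)\le\min\{j-1,\hat s\}$ for some fixed $\hat s$, and the update function $u:\mathbb{N}\to\{1,\dots,n\}$ is such that for every $i$ and every $j$ there is $l>j$ with $u(l)=i$. Chazan–Miranker's theorem: such a scheme converges if $\rho(|\mathbf{B}|)<1$. *)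

(* Defs.v *)
From HB Require Import structures.
From mathcomp Require Import all_boot all_order all_algebra.
From mathcomp Require Import all_classical all_reals all_analysis.
Set Implicit Arguments. Unset Strict Implicit. Unset Printing Implicit Defensive.
Import Order.TTheory GRing.Theory Num.Theory.
Local Open Scope ring_scope.

(* Matrices of size n = m * b, partitioned into m x m square blocks of size b.
   The block index of a row/column i : 'I_(m*b) is i %/ b. *)

Lemma blk_idx_subproof (m b : nat) (k : 'I_m) (p : 'I_b) : (k * b + p < m * b)%N.
Proof.
have hk := ltn_ord k; have hp := ltn_ord p.
apply: (leq_trans (n := k * b + b)); first by rewrite ltn_add2l.
by rewrite -mulSnr leq_mul2r hk orbT.
Qed.

Definition blk_idx (m b : nat) (k : 'I_m) (p : 'I_b) : 'I_(m * b) :=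
  Ordinal (blk_idx_subproof k p).

Definition diag_block {R : Type} (m b : nat) (A : 'M[R]_(m * b)) (k : 'I_m) : 'M[R]_b :=
  \matrix_(p, q) A (blk_idx k p) (blk_idx k q).

Definition lower_block_triangular {R : pzRingType} (m b : nat) (A : 'M[R]_(m * b)) :=
  forall i j : 'I_(m * b), (i %/ b < j %/ b)%N -> A i j = 0.

Definition block_diag_part {R : pzRingType} (m b : nat) (A : 'M[R]_(m * b)) : 'M[R]_(m * b) :=
  \matrix_(i, j) (if (i %/ b == j %/ b)%N then A i j else 0).

Definition strict_lower_part {R : pzRingType} (m b : nat) (A : 'M[R]_(m * b)) : 'M[R]_(m * b) :=
  A - block_diag_part A.

(* Chaotic relaxation (Chazan--Miranker) for the splitting A = M + N,
   B := - M^{-1} N, C := M^{-1}.  Time is shifted to start at 0: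
   x 0 is the arbitrary initial vector (the paper's x^1), and the paper's
   constraint 0 <= s_a(j) <= min(j-1, shat) for j >= 1 becomes s a j <= min(j, shat). *)
Definition chaotic_relaxation {R : comUnitRingType} (n : nat) (M N : 'M[R]_n) (bv : 'cV[R]_n)
    (shat : nat) (s : 'I_n -> nat -> nat) (u : nat -> 'I_n) (x : nat -> 'cV[R]_n) : Prop :=
  let B := - (invmx M *m N) in
  let C := invmx M in
  [/\ (forall a j, (s a j <= minn j shat)%N),
      (forall (i : 'I_n) (j : nat), exists l : nat, (j < l)%N /\ u l = i) &
      (forall (j : nat) (i : 'I_n),
         x j.+1 i 0 = if i == u j
                      then \sum_(a < n) B i a * x (j - s a j)%N a 0 + (C *m bv) i 0
                      else x j i 0)].

(* Main.v *)
Require Import Defs.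
From HB Require Import structures.
From mathcomp Require Import all_boot all_order all_algebra.
From mathcomp Require Import all_classical all_reals all_analysis.
Import Order.TTheory GRing.Theory Num.Theory.
Import numFieldNormedType.Exports.
Local Open Scope classical_set_scope.
Local Open Scope ring_scope.

Lemma ord_b_pos {m b : nat} (i : 'I_(m * b)) : (0 < b)%N.
Proof. have := ltn_ord i; move: (nat_of_ord i) => k; clear i; by case: b => //; rewrite muln0. Qed.

Lemma blk_lt {m b : nat} (i : 'I_(m * b)) : (i %/ b < m)%N.
Proof. by rewrite (ltn_divLR _ _ (ord_b_pos i)) ltn_ord. Qed.

Lemma off_lt {m b : nat} (i : 'I_(m * b)) : (i %% b < b)%N.
Proof. by rewrite ltn_pmod ?(ord_b_pos i). Qed.

Definition blk_of {m b : nat} (i : 'I_(m * b)) : 'I_m := Ordinal (blk_lt i).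
Definition off_of {m b : nat} (i : 'I_(m * b)) : 'I_b := Ordinal (off_lt i).

Lemma blk_idx_div {m b : nat} (k : 'I_m) (p : 'I_b) : ((blk_idx k p) %/ b = k)%N.
Proof.
rewrite /= divnMDl ?divn_small ?addn0 //; by case: b p {k} => [[]|].
Qed.

Lemma blk_idx_mod {m b : nat} (k : 'I_m) (p : 'I_b) : ((blk_idx k p) %% b = p)%N.
Proof. by rewrite /= modnMDl modn_small. Qed.

Lemma blk_of_idx {m b : nat} (k : 'I_m) (p : 'I_b) : blk_of (blk_idx k p) = k.
Proof. by apply: val_inj; rewrite /= blk_idx_div. Qed.

Lemma off_of_idx {m b : nat} (k : 'I_m) (p : 'I_b) : off_of (blk_idx k p) = p.
Proof. by apply: val_inj; rewrite /= blk_idx_mod. Qed.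

Lemma idx_of {m b : nat} (i : 'I_(m * b)) : blk_idx (blk_of i) (off_of i) = i.
Proof. by apply: val_inj; rewrite /= -divn_eq. Qed.

Lemma blk_sum (R : nmodType) {m b : nat} (F : 'I_(m * b) -> R) (k : 'I_m) :
  \sum_(l : 'I_(m * b) | (l %/ b == k)%N) F l = \sum_(p < b) F (blk_idx k p).
Proof.
transitivity (\sum_(l in [set blk_idx k p | p in 'I_b]%SET) F l).
  apply: eq_bigl => l; apply/eqP/imsetP.
    move=> hl; exists (off_of l) => //; have -> : k = blk_of l by apply: val_inj; rewrite /= hl.
    by rewrite idx_of.
  by case=> p _ ->; rewrite blk_idx_div.
rewrite big_imset //= => p q _ _ /(congr1 val) /= /addnI h; exact: val_inj.
Qed.
Lemma blk_ofE {m b : nat} (i : 'I_(m * b)) : (blk_of i : nat) = (i %/ b)%N.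
Proof. by []. Qed.
Lemma off_ofE {m b : nat} (i : 'I_(m * b)) : (off_of i : nat) = (i %% b)%N.
Proof. by []. Qed.

Definition Einv {R : comUnitRingType} {m b : nat} (L : 'M[R]_(m * b)) : 'M[R]_(m * b) :=
  \matrix_(i, j) if (i %/ b == j %/ b)%N
                 then invmx (diag_block L (blk_of i)) (off_of i) (off_of j) else 0.

Lemma DE1 {R : comUnitRingType} {m b : nat} (L : 'M[R]_(m * b)) :
  (forall k, diag_block L k \in unitmx) -> block_diag_part L *m Einv L = 1%:M.
Proof.
move=> hD; apply/matrixP => i j; rewrite !mxE.
rewrite (bigID (fun l : 'I_(m * b) => (l %/ b == blk_of i)%N)) /=.
rewrite [X in _ + X]big1 ?addr0; last first.
  by move=> l hl; rewrite !mxE eq_sym -blk_ofE (negbTE hl) mul0r.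
rewrite (blk_sum _ _ (blk_of i)).
set k := blk_of i.
have hL : forall p, L i (blk_idx k p) = diag_block L k (off_of i) p.
  by move=> p; rewrite mxE idx_of.
under eq_bigr => p _ do rewrite !mxE blk_idx_div blk_ofE eqxx blk_of_idx off_of_idx hL.
case: (eqVneq (k : nat) (j %/ b)%N) => hk.
  have hj : blk_of j = k by apply: val_inj; rewrite /= -hk.
  have := mulmxV (hD k) => /matrixP /(_ (off_of i) (off_of j)).
  rewrite !mxE => ->; case: (eqVneq i j) => [->|hij]; first by rewrite !eqxx.
  case: eqP => // h; case/eqP: hij.
  by rewrite -(idx_of i) -(idx_of j) h hj.
rewrite big1; last by move=> p _; rewrite mulr0.
case: (eqVneq i j) => hij //; by move: hk; rewrite /k blk_ofE hij eqxx.
Qed.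

Lemma Dunit {R : comUnitRingType} {m b : nat} (L : 'M[R]_(m * b)) :
  (forall k, diag_block L k \in unitmx) ->
  block_diag_part L \in unitmx /\ invmx (block_diag_part L) = Einv L.
Proof.
move=> hD; have h := DE1 L hD; have [hu _] := mulmx1_unit h; split => //.
by rewrite -[RHS](mulKmx hu) h mulmx1.
Qed.

Lemma Bzero {R : comUnitRingType} {m b : nat} (L : 'M[R]_(m * b)) :
  lower_block_triangular L -> (forall k, diag_block L k \in unitmx) ->
  forall i a : 'I_(m * b), (i %/ b <= a %/ b)%N ->
  (invmx (block_diag_part L) *m strict_lower_part L) i a = 0.
Proof.
move=> hL hD i a hia; have [_ ->] := Dunit L hD.
rewrite mxE big1 // => l _; rewrite !mxE.
case: eqP => hil; last by rewrite mul0r.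
case: eqP => hla; first by rewrite subrr mulr0.
rewrite hL ?subr0 ?mulr0 //.
by rewrite ltn_neqAle -hil hia andbT; apply/eqP; rewrite hil.
Qed.

From mathcomp Require Import zify.

Theorem theorem2 (R : realType) (m b : nat) (L : 'M[R]_(m * b)) (bv : 'cV[R]_(m * b))
    (hL : lower_block_triangular L)
    (hD : forall k : 'I_m, diag_block L k \in unitmx)
    (shat : nat) (s : 'I_(m * b) -> nat -> nat) (u : nat -> 'I_(m * b))
    (x : nat -> 'cV[R]_(m * b))
    (hx : chaotic_relaxation (block_diag_part L) (strict_lower_part L) bv shat s u x) :
  exists xs : 'cV[R]_(m * b),
    L *m xs = bv /\ forall i : 'I_(m * b), (fun j => x j i 0) @ \oo --> xs i 0.
Proof.
case: hx => hs hu hrec.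
set D := block_diag_part L in hrec *.
set N := strict_lower_part L in hrec *.
set c := invmx D *m bv in hrec *.
set Bm := - (invmx D *m N) in hrec *.
have hB : forall i a : 'I_(m * b), (i %/ b <= a %/ b)%N -> Bm i a = 0.
  by move=> i a h; rewrite /Bm mxE Bzero // oppr0.
pose cst (i : 'I_(m * b)) T := forall j, (T <= j)%N -> x j i 0 = x T i 0.
have step : forall i : 'I_(m * b), (forall a : 'I_(m * b), (a %/ b < i %/ b)%N -> exists T, cst a T) ->
    exists T, cst i T.
  move=> i IH.
  have [Tf hTf] : exists Tf : 'I_(m * b) -> nat,
      forall a : 'I_(m * b), (a %/ b < i %/ b)%N -> cst a (Tf a).
    apply: (fin_all_exists (P := fun (a : 'I_(m * b)) T => (a %/ b < i %/ b)%N -> cst a T)) => a.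
    case: (ltnP (a %/ b) (i %/ b)) => h; last by exists 0%N.
    by have [T hT] := IH a h; exists T.
  pose T0 := (\max_a Tf a)%N.
  have hT0 : forall a : 'I_(m * b), (a %/ b < i %/ b)%N -> forall j, (T0 <= j)%N ->
      x j a 0 = x T0 a 0.
    move=> a ha j hj; rewrite (hTf a ha j) ?(hTf a ha T0) //; first exact: leq_bigmax.
    exact: leq_trans (leq_bigmax a) hj.
  pose V := \sum_a Bm i a * x T0 a 0 + c i 0.
  have hupd : forall j, (T0 + shat <= j)%N ->
      \sum_a Bm i a * x (j - s a j)%N a 0 + c i 0 = V.
    move=> j hj; congr (_ + _); apply: eq_bigr => a _.
    case: (ltnP (a %/ b) (i %/ b)) => ha; last by rewrite hB // !mul0r.
    rewrite hT0 //; have := hs a j; lia.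
  have [l [hl hul]] := hu i (T0 + shat)%N.
  have key : forall j, (l.+1 <= j)%N -> x j i 0 = V.
    elim => // j IHj hj; rewrite hrec; case: eqP => [hij|hij].
      by rewrite hupd //; lia.
    case: (ltnP l j) => hjl; first exact: IHj.
    have ejl : j = l by lia.
    by case: hij; rewrite ejl hul.
  exists l.+1 => j hj; rewrite !key //.
have allc : forall i : 'I_(m * b), exists T, cst i T.
  suff H : forall k (i : 'I_(m * b)), (i %/ b <= k)%N -> exists T, cst i T.
    by move=> i; exact: H _ i (leqnn _).
  elim=> [|k IHk] i hi; apply: step => a ha.
    by move: ha; rewrite leqn0 in hi; rewrite (eqP hi) ltn0.
  by apply: IHk; exact: leq_trans ha hi.
have [Tf hTf] := fin_all_exists allc.
pose xs := \col_i x (Tf i) i 0.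
exists xs; split; last first.
  move=> i; apply: cvg_near_cst; exists (Tf i) => // j /= hj.
  by rewrite mxE hTf.
have [hDu _] := Dunit L hD.
have fp : xs = Bm *m xs + c.
  apply/matrixP => i j'; rewrite (ord1 j') !mxE.
  pose Ts := (\max_a Tf a)%N.
  have [l [hl hul]] := hu i (Ts + shat)%N.
  have hTi := leq_bigmax (F := Tf) i.
  rewrite -(hTf i l.+1); last by rewrite -/Ts; lia.
  rewrite hrec hul eqxx; congr (_ + _); last by rewrite /c mxE.
  have ee : forall a, Bm i a * x (l - s a l)%N a 0 = Bm i a * xs a 0.
    move=> a; have hle : (Tf a <= l - s a l)%N.
      by have := leq_bigmax (F := Tf) a; have := hs a l; rewrite -/Ts; lia.
    by rewrite (hTf a _ hle) /xs mxE.
  under eq_bigr => a _ do rewrite ee.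
  by [].
have eL : L = D + N by rewrite /N /strict_lower_part addrC subrK.
rewrite eL mulmxDl {1}fp mulmxDr mulmxA /Bm mulmxN mulKVmx // mulNmx /c mulKVmx //.
by rewrite addrAC addNr add0r.
Qed.
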